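(* For $k\ge0$ let $\Delta_k$ be the path graph with $2k+1$ vertices and $2k$ edges (vertices labeled consecutively along the path), so $\Delta_0$ is a single vertex. Then, as formal power series, $$\tan x=\sum_{k=0}^{\infty}\frac{|c_{\Delta_k}|}{(2k+1)!}\,x^{2k+1}.$$
   Context: A labeled graph with $V$ vertices and $E$ edges is a map $s:\{1,\ldots,E\}\to\mathcal{P}_2\{1,\ldots,V\}$; edges $\{i,j\}$, $i<j$, are oriented $i\to j$. $c_\Gamma:=\sum_{\sigma\in S_V}\prod_{e:\,i\to j}\operatorname{sign}(\sigma(j)-\sigma(i))$ (its absolute value does not depend on the labeling). *)

(* Defs.v *)
From mathcomp Require Import all_boot all_order all_algebra all_fingroup.
Set Implicit Arguments. Unset Strict Implicit. Unset Printing Implicit Defensive.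
Import GRing.Theory Num.Theory.
Local Open Scope ring_scope.

(* A labeled graph with V vertices and E edges: s : 'I_E -> 'I_V * 'I_V,
   where s e = (a, b) denotes the unordered edge {a, b} (a <> b). *)
Definition edge_tail (V : nat) (p : 'I_V * 'I_V) : 'I_V :=
  if (p.1 < p.2)%N then p.1 else p.2.
Definition edge_head (V : nat) (p : 'I_V * 'I_V) : 'I_V :=
  if (p.1 < p.2)%N then p.2 else p.1.

Definition c_graph (V E : nat) (s : 'I_E -> 'I_V * 'I_V) : int :=
  \sum_(sigma : 'S_V) \prod_(e : 'I_E)
     Num.sg ((sigma (edge_head (s e)))%:Z - (sigma (edge_tail (s e)))%:Z).

Definition path_edges (k : nat) : 'I_(2 * k) -> 'I_((2 * k).+1) * 'I_((2 * k).+1) :=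
  fun e => (inord (nat_of_ord e), inord (nat_of_ord e).+1).

Definition abs_c_path (k : nat) : nat := absz (c_graph (@path_edges k)).

(* Main.v *)
Require Import Defs.
From mathcomp Require Import all_boot all_order all_algebra all_fingroup.
From mathcomp Require Import zify ring.
From mathcomp Require Import Rstruct.
Set Implicit Arguments. Unset Strict Implicit. Unset Printing Implicit Defensive.
Import Order.TTheory GRing.Theory Num.Theory.

Section Combinatorics.
Local Open Scope ring_scope.
Lemma sum_lift_perm (R : nmodType) n (i0 j0 : 'I_n.+1) (F : 'S_n.+1 -> R) :
  \sum_(s : 'S_n.+1 | s i0 == j0) F s = \sum_(t : 'S_n) F (lift_perm i0 j0 t).
Proof.
rewrite (reindex (lift_perm i0 j0)); last first.
  pose ulsf i (s : 'S_n.+1) k := odflt k (unlift (s i) (s (lift i k))).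
  have ulsfK i (s : 'S_n.+1) k: lift (s i) (ulsf i s k) = s (lift i k).
    rewrite /ulsf; have:= neq_lift i k.
    by rewrite -(can_eq (permK s)) => /unlift_some[] ? ? ->.
  have inj_ulsf: injective (ulsf i0 _).
    move=> s; apply: can_inj (ulsf (s i0) s^-1%g) _ => k'.
    by rewrite {1}/ulsf ulsfK !permK liftK.
  exists (fun s => perm (inj_ulsf s)) => [s _ | s].
    by apply/permP=> k'; rewrite permE /ulsf lift_perm_lift lift_perm_id liftK.
  move/(s _ =P _) => si0; apply/permP=> k.
  case: (unliftP i0 k) => [k'|] ->; rewrite ?lift_perm_id //.
  by rewrite lift_perm_lift -si0 permE ulsfK.
by apply: eq_bigl => s; rewrite lift_perm_id eqxx.
Qed.
Definition Wt n (s : 'S_n.+1) : int :=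
  \prod_(e < n) Num.sg ((s (inord e.+1))%:Z - (s (inord e))%:Z).
Definition Dc n (j : nat) : int :=
  \sum_(s : 'S_n.+1 | nat_of_ord (s ord_max) == j) Wt s.

Lemma sgdE (a b : nat) :
  Num.sg (a%:Z - b%:Z) = if (b < a)%N then 1 else if (a < b)%N then -1 else 0.
Proof.
case: (ltngtP a b) => h.
- by apply: ltr0_sg; rewrite subr_lt0 ltz_nat.
- by apply: gtr0_sg; rewrite subr_gt0 ltz_nat.
- by rewrite h subrr sgr0.
Qed.

Lemma ltn_bump2 h i j : (bump h i < bump h j)%N = (i < j)%N.
Proof. by rewrite !ltnNge leq_bump2. Qed.

Lemma sg_bump (j a b : nat) :
  Num.sg ((bump j a)%:Z - (bump j b)%:Z) = Num.sg (a%:Z - b%:Z).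
Proof. by rewrite !sgdE !ltn_bump2. Qed.

Lemma Wt_lift n (J : 'I_n.+2) (t : 'S_n.+1) :
  Wt (lift_perm ord_max J t) = Wt t * (if (t ord_max < J)%N then 1 else -1).
Proof.
rewrite /Wt big_ord_recr /=; congr (_ * _).
  apply: eq_bigr => e _.
  have E1 : (inord (widen_ord (leqnSn n) e).+1 : 'I_n.+2) = lift ord_max (inord e.+1 : 'I_n.+1).
    apply: val_inj => /=; have he := ltn_ord e; rewrite /bump inordK ?inordK; try lia; by rewrite ltnNge he.
  have E2 : (inord (widen_ord (leqnSn n) e) : 'I_n.+2) = lift ord_max (inord e : 'I_n.+1).
    apply: val_inj => /=; have he := ltn_ord e; rewrite /bump inordK ?inordK; try lia; by rewrite ltnNge (ltnW he).
  by rewrite E1 E2 !lift_perm_lift /= sg_bump.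
have E1 : (inord n.+1 : 'I_n.+2) = ord_max by apply: val_inj; rewrite /= inordK.
have E2 : (inord n : 'I_n.+2) = lift ord_max (ord_max : 'I_n.+1).
  by apply: val_inj => /=; rewrite /bump inordK // ltnn.
rewrite E1 E2 lift_perm_id lift_perm_lift /= sgdE.
rewrite /bump; case: (leqP J (t ord_max)) => h /=; rewrite ?add1n ?add0n.
  have h1 : ((t ord_max).+1 < J)%N = false by apply/negbTE; rewrite -leqNgt; lia.
  have h2 : (J < (t ord_max).+1)%N by lia.
  by rewrite h1 h2.
by rewrite h.
Qed.

Lemma sum_partition_last n (F : 'S_n.+1 -> int) :
  \sum_(t : 'S_n.+1) F t = \sum_(v < n.+1) \sum_(t : 'S_n.+1 | t ord_max == v) F t.
Proof. by rewrite (partition_big (fun t : 'S_n.+1 => t ord_max) xpredT). Qed.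

Lemma Dc_rec n j : (j < n.+2)%N ->
  Dc n.+1 j = \sum_(v < n.+1) Dc n v * (if (v < j)%N then 1 else -1).
Proof.
move=> hj; set J := Ordinal hj.
rewrite /Dc (eq_bigl (fun s : 'S_n.+2 => s ord_max == J)) //.
rewrite sum_lift_perm.
under eq_bigr do rewrite Wt_lift.
rewrite sum_partition_last; apply: eq_bigr => v _.
rewrite big_distrl /=.
apply: eq_big => [t|t /eqP ->] //.
Qed.

Fixpoint D (n j : nat) : int :=
  match n with
  | 0 => (j == 0%N)%:R
  | n'.+1 => \sum_(v < n'.+1) D n' v * (if (v < j)%N then 1 else -1)
  end.

Lemma Dc_D n j : (j <= n)%N -> Dc n j = D n j.
Proof.
elim: n j => [|n IH] j hj.
  have -> : j = 0%N by lia.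
  rewrite /Dc /= (eq_bigl xpredT) => [|s]; last by case: (s ord_max) => -[].
  rewrite /Wt; under eq_bigr do rewrite big_ord0.
  by rewrite sumr_const card_Sn.
rewrite Dc_rec /=; last by lia.
by apply: eq_bigr => v _; rewrite IH // -ltnS.
Qed.

Definition Asum n : int := \sum_(s : 'S_n.+1) Wt s.

Lemma Asum_D n : Asum n = \sum_(v < n.+1) D n v.
Proof.
rewrite /Asum sum_partition_last; apply: eq_bigr => v _.
by rewrite -Dc_D // -ltnS.
Qed.

Lemma binM_nat (n k i : nat) : (i <= k)%N -> (k <= n)%N ->
  ('C(n, k) * 'C(k, i) = 'C(n, i) * 'C(n - i, k - i))%N.
Proof.
move=> hik hkn.
have hpos : (0 < i`! * (k - i)`! * (n - k)`!)%N by rewrite !muln_gt0 !fact_gt0.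
apply/eqP; rewrite -(eqn_pmul2r hpos); apply/eqP.
have e1 : ('C(n, k) * 'C(k, i) * (i`! * (k - i)`! * (n - k)`!) = n`!)%N.
  rewrite -(bin_fact hkn) -(bin_fact hik).
  by rewrite !mulnA; ring.
have e2 : ('C(n, i) * 'C(n - i, k - i) * (i`! * (k - i)`! * (n - k)`!) = n`!)%N.
  have hni : (i <= n)%N by apply: leq_trans hkn.
  rewrite -(bin_fact hni).
  have h2 : (k - i <= n - i)%N by lia.
  have <- := bin_fact h2.
  have -> : (n - i - (k - i) = n - k)%N by lia.
  by ring.
by rewrite e1 e2.
Qed.

Section Conv.
Variable R : comRingType.

Lemma exp_conv (a b : R) (f : nat -> R) n :
  \sum_(0 <= k < n.+1) 'C(n, k)%:R * a ^+ (n - k) *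
      (\sum_(0 <= i < k.+1) 'C(k, i)%:R * f i * b ^+ (k - i))
  = \sum_(0 <= i < n.+1) 'C(n, i)%:R * f i * (a + b) ^+ (n - i).
Proof.
have step1 : forall k, (k < n.+1)%N ->
   \sum_(0 <= i < k.+1) 'C(k, i)%:R * f i * b ^+ (k - i)
 = \sum_(0 <= i < n.+1) 'C(k, i)%:R * f i * b ^+ (k - i).
  move=> k hk.
  rewrite [RHS](@big_cat_nat _ _ _ k.+1) //=.
  rewrite [X in _ = _ + X]big1_seq ?addr0 // => i /andP [_].
  rewrite mem_index_iota => /andP [hi _].
  by rewrite bin_small // mul0r mul0r.
rewrite big_nat_cond.
rewrite (eq_bigr (fun k => \sum_(0 <= i < n.+1) 'C(n, k)%:R * a ^+ (n - k) * ('C(k, i)%:R * f i * b ^+ (k - i)))); last first.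
  move=> k /andP [/andP [_ hk] _].
  by rewrite step1 // big_distrr.
rewrite -big_nat_cond exchange_big_nat /=.
apply: eq_big_nat => i /andP [_ hi].
rewrite exprDn.
rewrite (@big_cat_nat _ _ _ i) //=; last by lia.
rewrite big1_seq ?add0r; last first.
  move=> k /andP [_]; rewrite mem_index_iota => /andP [_ hk].
  by rewrite (bin_small hk) !mul0r mulr0.
rewrite -{1}(add0n i) big_addn.
have -> : (n.+1 - i = (n - i).+1)%N by lia.
rewrite big_mkord big_distrr /=.
apply: eq_bigr => l _.
have hl := ltn_ord l.
have e := @binM_nat n (l + i) i (leq_addl _ _) (ltac:(lia)).
have -> : (n - (l + i) = n - i - l)%N by lia.
have -> : (l + i - i = l)%N by lia.
rewrite addnK in e.
have e' : 'C(n, l + i)%:R * 'C(l + i, i)%:R = 'C(n, i)%:R * 'C(n - i, l)%:R :> R.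
  by rewrite -!natrM e.
rewrite -mulr_natl.
transitivity (('C(n, l + i)%:R * 'C(l + i, i)%:R) * (f i * a ^+ (n - i - l) * b ^+ l) : R).
  by ring.
by rewrite e'; ring.
Qed.
End Conv.

Definition Tot n : int := \sum_(0 <= v < n.+1) D n v.
Definition Aseq m : int := if m is m'.+1 then Tot m' else 0.
Definition alpha m : int := (m == 0%N)%:R - Aseq m.

Lemma D_split n j : (j <= n.+1)%N ->
  D n.+1 j = 2 * \sum_(0 <= v < j) D n v - Tot n.
Proof.
move=> hj; rewrite /= /Tot -(big_mkord xpredT (fun v : nat => D n v * (if (v < j)%N then 1 else -1))).
rewrite !(@big_cat_nat _ _ _ j 0 n.+1) //=.
rewrite [X in X + _](eq_big_nat _ _ (F2 := fun v => D n v)); last first.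
  by move=> v /andP [_ hv]; rewrite hv mulr1.
rewrite [X in _ + X](eq_big_nat _ _ (F2 := fun v => - D n v)); last first.
  by move=> v /andP [hv _]; rewrite ltnNge hv mulrN1.
rewrite sumrN; ring.
Qed.

Lemma hockey (i j : nat) : \sum_(0 <= v < j) ('C(v, i)%:R : int) = 'C(j, i.+1)%:R.
Proof.
elim: j => [|j IH]; first by rewrite big_geq.
by rewrite big_nat_recr //= IH binS natrD addrC.
Qed.

Lemma D_closed n j : (j <= n)%N ->
  D n j = \sum_(0 <= i < n.+1) 2 ^+ i * 'C(j, i)%:R * alpha (n - i)%N.
Proof.
elim: n j => [|n IH] j hj.
  have -> : j = 0%N by lia.
  by rewrite big_nat1 /alpha /=.
rewrite D_split; last by lia.
rewrite (eq_big_nat _ _ (F2 := fun v => \sum_(0 <= i < n.+1) 2 ^+ i * 'C(v, i)%:R * alpha (n - i)%N)); last first.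
  by move=> v /andP [_ hv]; rewrite IH //; lia.
rewrite exchange_big_nat /=.
rewrite (eq_big_nat _ _ (F2 := fun i => 2 ^+ i * alpha (n - i)%N * 'C(j, i.+1)%:R)); last first.
  move=> i _; rewrite -hockey big_distrr /=; apply: eq_bigr => v _; ring.
rewrite [RHS]big_nat_recl //= bin0 /alpha /= expr0 !mul1r sub0r.
rewrite big_distrr /= addrC; congr (_ + _).
apply: eq_bigr => i _; rewrite exprS subSS; ring.
Qed.

Lemma Aseq_eq m : (0 < m)%N ->
  Aseq m = \sum_(0 <= i < m.+1) 2 ^+ i * 'C(m, i)%:R * alpha (m - i)%N.
Proof.
case: m => // n _.
rewrite -D_closed // D_split // /Tot /=; ring.
Qed.

Lemma sum_delta m :
  \sum_(0 <= i < m.+1) 2 ^+ i * 'C(m, i)%:R * (((m - i)%N == 0%N)%:R : int) = 2 ^+ m.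
Proof.
rewrite big_nat_recr //= subnn eqxx binn mulr1 mulr1 big1_seq ?add0r //.
move=> i /andP [_]; rewrite mem_index_iota => /andP [_ hi].
have -> : ((m - i)%N == 0%N) = false by apply/negbTE; lia.
by rewrite mulr0.
Qed.

Lemma sum_rev_A m :
  \sum_(0 <= i < m.+1) 2 ^+ i * 'C(m, i)%:R * Aseq (m - i)%N
  = \sum_(0 <= i < m.+1) 'C(m, i)%:R * Aseq i * 2 ^+ (m - i)%N.
Proof.
rewrite big_nat_rev /=; apply: eq_big_nat => i /andP [_ hi].
have e1 : (0 + m.+1 - i.+1 = m - i)%N by lia.
have e2 : (m - (m - i) = i)%N by lia.
rewrite add0n e1 e2 bin_sub; last by lia.
ring.
Qed.

Lemma keyK m :
  Aseq m + \sum_(0 <= i < m.+1) 'C(m, i)%:R * Aseq i * 2 ^+ (m - i)%N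
  = 2 ^+ m - (m == 0%N)%:R.
Proof.
case: m => [|n]; first by rewrite big_nat1 /= mulr0 mul0r addr0 expr0 subrr.
have := Aseq_eq (ltn0Sn n) => ->.
rewrite /alpha.
under eq_bigr do rewrite mulrBr.
rewrite sumrB sum_delta sum_rev_A /=; ring.
Qed.

Lemma conv_id n :
  \sum_(0 <= k < n.+1) 'C(n, k)%:R * Aseq k * ((-1) ^+ (n - k)%N + 1)
  = 1 - (-1) ^+ n.
Proof.
pose inner k := \sum_(0 <= i < k.+1) 'C(k, i)%:R * Aseq i * 2 ^+ (k - i)%N.
have H : \sum_(0 <= k < n.+1) 'C(n, k)%:R * (-1) ^+ (n - k)%N * (Aseq k + inner k)
  = \sum_(0 <= k < n.+1) 'C(n, k)%:R * (-1) ^+ (n - k)%N * (2 ^+ k - (k == 0%N)%:R) :> int.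
  by apply: eq_bigr => k _; rewrite /inner keyK.
have E1 : \sum_(0 <= k < n.+1) 'C(n, k)%:R * (-1) ^+ (n - k)%N * (Aseq k + inner k)
  = \sum_(0 <= k < n.+1) 'C(n, k)%:R * (-1) ^+ (n - k)%N * Aseq k
  + \sum_(0 <= k < n.+1) 'C(n, k)%:R * (-1) ^+ (n - k)%N * inner k.
  by rewrite -big_split; apply: eq_bigr => k _ /=; ring.
have E2 := exp_conv (-1) 2 Aseq n.
transitivity (\sum_(0 <= k < n.+1) 'C(n, k)%:R * (-1) ^+ (n - k)%N * (Aseq k + inner k)).
  rewrite E1 /inner E2 -big_split; apply: eq_bigr => k _ /=.
  rewrite (_ : -1 + 2 = 1 :> int) // expr1n; ring.
rewrite H.
under eq_bigr do rewrite mulrBr.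
rewrite sumrB [X in _ - X]big_nat_recl //=.
rewrite [X in _ - (_ + X)]big1_seq ?addr0; last by move=> i _; rewrite mulr0.
rewrite bin0 subn0 mulr1 mul1r.
have -> : \sum_(0 <= i < n.+1) 'C(n, i)%:R * (-1) ^+ (n - i)%N * 2 ^+ i = (-1 + 2 : int) ^+ n.
  rewrite exprDn big_mkord; apply: eq_bigr => i _; rewrite -mulr_natl; ring.
by rewrite (_ : -1 + 2 = 1 :> int) // expr1n.
Qed.

Lemma F1 n : odd n ->
  \sum_(0 <= k < n.+1) 'C(n, k)%:R * Aseq k * (odd k)%:R = 1.
Proof.
move=> hn.
have := conv_id n.
rewrite -signr_odd hn expr1 opprK.
rewrite (eq_big_nat _ _ (F2 := fun k => 2 * ('C(n, k)%:R * Aseq k * (odd k)%:R))); last first.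
  move=> k /andP [_ hk].
  rewrite -signr_odd oddB; last by lia.
  rewrite hn; case: (odd k) => /=; ring.
rewrite -big_distrr /= => h.
have h2 : (2 : int) != 0 by [].
by apply: (mulfI h2); rewrite h mulr1.
Qed.

Lemma split_rev (F : nat -> int) n j : (j <= n.+1)%N ->
  \sum_(0 <= v < n.+1) F v = \sum_(0 <= v < n.+1 - j) F v + \sum_(0 <= u < j) F (n - u)%N.
Proof.
move=> hj.
rewrite (@big_cat_nat _ _ _ (n.+1 - j)) //=; last by lia.
congr (_ + _).
have -> : (n.+1 - j = 0 + (n.+1 - j))%N by [].
rewrite big_addn subKn //.
rewrite big_nat_rev /=; apply: eq_big_nat => u /andP [_ hu].
congr (F _); lia.
Qed.

Lemma D_sym n j : (j <= n)%N -> D n (n - j) = (-1) ^+ n * D n j.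
Proof.
elim: n j => [|n IH] j hj.
  by have -> : j = 0%N by lia.
have Tsym : Tot n = (-1) ^+ n * Tot n.
  rewrite {1}/Tot (split_rev _ (leqnn n.+1)) subnn big_geq // add0r.
  rewrite /Tot big_distrr /=; apply: eq_big_nat => u /andP [_ hu].
  by rewrite IH //; lia.
rewrite !D_split //; last by lia.
have hrev : \sum_(0 <= u < j) D n (n - u)%N = (-1) ^+ n * \sum_(0 <= v < j) D n v.
  rewrite big_distrr /=; apply: eq_big_nat => u /andP [_ hu].
  by rewrite IH //; lia.
have hT := split_rev (D n) hj.
rewrite -/(Tot n) hrev in hT.
set S1 := \sum_(0 <= v < n.+1 - j) D n v.
set S2 := \sum_(0 <= v < j) D n v.
have e : S1 = Tot n - (-1) ^+ n * S2 by rewrite hT; ring.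
rewrite e exprS.
transitivity (Tot n - 2 * (-1) ^+ n * S2); first by ring.
rewrite {1}Tsym; ring.
Qed.

Lemma Tot_sym n : Tot n = (-1) ^+ n * Tot n.
Proof.
rewrite {1}/Tot (split_rev _ (leqnn n.+1)) subnn big_geq // add0r.
rewrite /Tot big_distrr /=; apply: eq_big_nat => u /andP [_ hu].
by rewrite D_sym //; lia.
Qed.

Lemma sign_even k : (-1) ^+ (2 * k)%N = 1 :> int.
Proof. by rewrite -signr_odd oddM. Qed.

Lemma D_pos k j : (j <= 2 * k)%N -> 0 <= (-1) ^+ k * D (2 * k) j.
Proof.
elim: k j => [|k IH] j hj.
  by have -> : j = 0%N by lia.
set n := (2 * k)%N.
have e2 : (2 * k.+1 = n.+2)%N by rewrite /n; lia.
rewrite e2 in hj *.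
have inc : forall i, (i <= n)%N -> D n.+1 i.+1 - D n.+1 i = 2 * D n i.
  move=> i hi; rewrite D_split; last lia.
  rewrite D_split; last lia.
  rewrite big_nat_recr //=; ring.
pose g i := (-1) ^+ k * D n.+1 i.
have mono : forall a b, (a <= b)%N -> (b <= n.+1)%N -> g a <= g b.
  move=> a b; elim: b => [|b IHb] hab hb.
    by have -> : a = 0%N by lia.
  rewrite leq_eqVlt in hab; case/orP: hab => [/eqP -> //| hab].
  apply: le_trans (IHb _ _) _; [lia|lia|].
  rewrite -subr_ge0 /g -mulrBr inc; last by lia.
  rewrite mulrCA; apply: mulr_ge0 => //; apply: IH; lia.
have sgn1 : (-1) ^+ n.+1 = -1 :> int by rewrite exprS sign_even mulr1.
have gneg : forall v, (v <= k)%N -> g v <= 0.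
  move=> v hv.
  have hv' : (v <= n.+1)%N by rewrite /n; lia.
  have hs := D_sym hv'; rewrite sgn1 mulN1r in hs.
  have := mono v (n.+1 - v)%N ltac:(rewrite /n; lia) ltac:(lia).
  rewrite /g hs mulrN; lia.
have T0 : Tot n.+1 = 0 by have := Tot_sym n.+1; rewrite sgn1; lia.
have Dn2 : forall i, (i <= n.+2)%N -> D n.+2 i = 2 * \sum_(0 <= v < i) D n.+1 v.
  by move=> i hi; rewrite D_split // T0 subr0.
have case1 : forall i, (i <= k.+1)%N -> 0 <= (-1) ^+ k.+1 * D n.+2 i.
  move=> i hi; rewrite Dn2; last by rewrite /n; lia.
  rewrite exprS mulN1r mulNr mulrCA big_distrr /= -mulrN -sumrN.
  apply: mulr_ge0 => //.
  rewrite big_seq; apply: sumr_ge0 => v; rewrite mem_index_iota => /andP [_ hvi].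
  rewrite oppr_ge0; apply: gneg; lia.
case: (leqP j k.+1) => hjk; first exact: case1.
have hj' : (n.+2 - j <= n.+2)%N by lia.
have sg2 : (-1) ^+ n.+2 = 1 :> int by rewrite -e2 sign_even.
have := D_sym hj'; rewrite subKn // sg2 mul1r => ->.
apply: case1; rewrite /n; lia.
Qed.

Lemma Tot_pos k : 0 <= (-1) ^+ k * Tot (2 * k).
Proof.
rewrite /Tot big_distrr /= big_seq; apply: sumr_ge0 => v.
rewrite mem_index_iota => /andP [_ hv]; apply: D_pos; lia.
Qed.

Lemma Tot_Asum n : Tot n = Asum n.
Proof. by rewrite Asum_D /Tot big_mkord. Qed.

Lemma Wt_bound n (s : 'S_n.+1) : `|Wt s| <= 1.
Proof.
rewrite /Wt; apply: (big_ind (fun x : int => `|x| <= 1)) => //.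
  by move=> x y hx hy; rewrite normrM; apply: mulr_ile1.
by move=> e _; rewrite normr_sg; case: (_ != 0).
Qed.

Lemma Tot_bound n : `|Tot n| <= (n.+1)`!%:R.
Proof.
rewrite Tot_Asum /Asum.
apply: (le_trans (ler_norm_sum _ _ _)).
have -> : (n.+1)`!%:R = \sum_(s : 'S_n.+1) (1 : int) by rewrite sumr_const card_Sn.
by apply: ler_sum => s _; apply: Wt_bound.
Qed.

Lemma c_graph_Asum k : c_graph (@path_edges k) = Asum (2 * k).
Proof.
rewrite /c_graph /Asum; apply: eq_bigr => s _.
rewrite /Wt; apply: eq_bigr => e _.
rewrite /path_edges /edge_head /edge_tail /=.
have he := ltn_ord e.
rewrite !inordK; [|lia|lia].
by rewrite ltnSn.
Qed.

Lemma abs_c_path_Tot k : (abs_c_path k)%:Z = (-1) ^+ k * Tot (2 * k).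
Proof.
rewrite /abs_c_path c_graph_Asum -Tot_Asum abszE.
have h := Tot_pos k.
have e : `|(-1) ^+ k * Tot (2 * k)| = `|Tot (2 * k)|.
  by rewrite normrM normrX normrN1 expr1n mul1r.
by rewrite -e ger0_norm.
Qed.

Definition TI k : int := if odd k then (-1) ^+ k./2 * Aseq k else 0.
Definition CI j : int := if odd j then 0 else (-1) ^+ j./2.
Definition SI n : int := if odd n then (-1) ^+ n./2 else 0.

Lemma half_add_odd n k : odd n -> odd k -> (k <= n)%N -> (k./2 + (n - k)./2 = n./2)%N.
Proof.
move=> hn hk hkn.
have h1 := odd_double_half n; have h2 := odd_double_half k.
have h3 := odd_double_half (n - k).
rewrite oddB // hn hk /= in h3.
rewrite hn in h1; rewrite hk in h2.
rewrite -!mul2n in h1 h2 h3.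
lia.
Qed.

Lemma conv_tan n :
  \sum_(0 <= k < n.+1) 'C(n, k)%:R * TI k * CI (n - k)%N = SI n.
Proof.
case hn: (odd n).
  rewrite /SI hn.
  transitivity ((-1) ^+ n./2 * \sum_(0 <= k < n.+1) 'C(n, k)%:R * Aseq k * (odd k)%:R : int).
    2: by rewrite (F1 hn) mulr1.
  rewrite big_distrr /=.
  apply: eq_big_nat => k /andP [_ hk].
  rewrite /TI /CI oddB; last by lia.
  rewrite hn; case hk': (odd k) => /=; last by rewrite !(mulr0, mul0r).
  rewrite -(half_add_odd hn hk') ?exprD; last by lia.
  ring.
rewrite /SI hn big1_seq // => k /andP [_]; rewrite mem_index_iota => /andP [_ hk].
rewrite /TI /CI oddB; last by lia.
rewrite hn; case: (odd k) => /=; first by rewrite mulr0.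
by rewrite mulr0 mul0r.
Qed.

End Combinatorics.

Section MC.
Local Open Scope ring_scope.

Definition acoef (k : nat) : Rdefinitions.R := (TI k)%:~R / (k`!)%:R.
Definition ccoef (k : nat) : Rdefinitions.R := (CI k)%:~R / (k`!)%:R.
Definition scoef (k : nat) : Rdefinitions.R := (SI k)%:~R / (k`!)%:R.

Lemma fact_neq0R k : (k`!)%:R != 0 :> Rdefinitions.R.
Proof. by rewrite pnatr_eq0 -lt0n fact_gt0. Qed.

Lemma real_conv n :
  \sum_(0 <= k < n.+1) acoef k * ccoef (n - k)%nat = scoef n.
Proof.
rewrite /scoef -conv_tan rmorph_sum /= mulr_suml.
apply: eq_big_nat => k /andP [_ hk].
have hkn : (k <= n)%nat by lia.
have hb := bin_fact hkn.
have hbR : ('C(n, k)%:R * ((k`!)%:R * ((n - k)`!)%:R) = (n`!)%:R :> Rdefinitions.R).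
  by rewrite -!natrM hb.
rewrite !rmorphM /= -hbR.
have h1 := fact_neq0R k; have h2 := fact_neq0R (n - k).
rewrite mulrz_nat.
have h0 : ('C(n, k)%:R : Rdefinitions.R) != 0 by rewrite pnatr_eq0 -lt0n bin_gt0.
rewrite /acoef /ccoef; field.
by rewrite h0 h1 h2.

Qed.

Lemma Aseq_bound k : `|Aseq k| <= (k`!)%:R.
Proof.
case: k => [|n] /=; first by rewrite normr0.
exact: Tot_bound.
Qed.

Lemma TI_bound k : `|TI k| <= (k`!)%:R.
Proof.
rewrite /TI; case: (odd k); last by rewrite normr0.
by rewrite normrM normrX normrN1 expr1n mul1r Aseq_bound.
Qed.

Lemma CI_bound k : `|CI k| <= (k`!)%:R.
Proof.
rewrite /CI; case: (odd k); first by rewrite normr0.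
rewrite normrX normrN1 expr1n.
by rewrite (ler_nat _ 1) fact_gt0.
Qed.

Lemma coef_bound (z : int) k : `|z| <= (k`!)%:R ->
  `|(z%:~R : Rdefinitions.R) / (k`!)%:R| <= 1.
Proof.
move=> hz.
have hpos : (0 : Rdefinitions.R) < (k`!)%:R by rewrite ltr0n fact_gt0.
rewrite normrM normfV normr_nat ler_pdivrMr // mul1r -intr_norm.
have -> : ((k`!)%:R : Rdefinitions.R) = ((k`!)%:R : int)%:~R by rewrite mulrz_nat.
by rewrite ler_int.
Qed.

Lemma acoef_bound k : `|acoef k| <= 1.
Proof. exact: coef_bound (TI_bound k). Qed.

Lemma ccoef_bound k : `|ccoef k| <= 1.
Proof. exact: coef_bound (CI_bound k). Qed.

Lemma acoef_abs n : odd n ->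
  ((abs_c_path n./2)%:R : Rdefinitions.R) / (n`!)%:R = acoef n.
Proof.
move=> hn; rewrite /acoef /TI hn.
have e : n = (2 * n./2).+1.
  have := odd_double_half n; rewrite hn -mul2n; lia.
have hA : Aseq n = Tot (2 * n./2) by rewrite {1}e.
rewrite hA -abs_c_path_Tot.
by rewrite -pmulrn.
Qed.
End MC.

From Stdlib Require Import Reals Factorial Lra.
From Coquelicot Require Import Coquelicot.
Open Scope R_scope.
Unset Implicit Arguments.

Lemma is_series_lim (a : nat -> R) (l : R) :
  is_series a l <-> is_lim_seq (sum_f_R0 a) l.
Proof.
rewrite is_series_Reals is_lim_seq_Reals. split; intro H; exact H.
Qed.

Lemma div2_ev : filterlim Nat.div2 eventually eventually.
Proof.
intros P [N HN]. exists (2 * N)%nat. intros n Hn. apply HN.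
pose proof (Nat.div2_odd n). destruct (Nat.odd n); simpl in *; lia.
Qed.

Lemma sum_even (b : nat -> R) N :
  sum_f_R0 (fun n => if Nat.odd n then 0 else b (Nat.div2 n)) N = sum_f_R0 b (Nat.div2 N).
Proof.
induction N as [|N IH].
- reflexivity.
- rewrite tech5 IH.
  pose proof (Nat.div2_odd N) as HN. pose proof (Nat.div2_odd (S N)) as HS.
  rewrite Nat.odd_succ. rewrite Nat.odd_succ in HS.
  rewrite -Nat.negb_odd in HS *.
  destruct (Nat.odd N) eqn:E; cbn [negb Nat.b2n] in *.
  + assert (Nat.div2 (S N) = S (Nat.div2 N)) as -> by lia. rewrite tech5. reflexivity.
  + assert (Nat.div2 (S N) = Nat.div2 N) as -> by lia. ring.
Qed.

Lemma sum_odd (b : nat -> R) N :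
  sum_f_R0 (fun n => if Nat.odd n then b (Nat.div2 n) else 0) (S N) = sum_f_R0 b (Nat.div2 N).
Proof.
induction N as [|N IH].
- simpl. ring.
- rewrite tech5 IH.
  pose proof (Nat.div2_odd N) as HN. pose proof (Nat.div2_odd (S N)) as HS.
  pose proof (Nat.div2_odd (S (S N))) as HSS.
  rewrite Nat.odd_succ Nat.even_succ. rewrite Nat.odd_succ in HS. rewrite Nat.odd_succ Nat.even_succ in HSS.
  rewrite -Nat.negb_odd in HS.
  destruct (Nat.odd N) eqn:E; cbn [negb Nat.b2n] in *.
  + assert (Nat.div2 (S N) = S (Nat.div2 N)) as -> by lia.
    assert (Nat.div2 (S (S N)) = S (Nat.div2 N)) as -> by lia. rewrite tech5. reflexivity.
  + assert (Nat.div2 (S N) = Nat.div2 N) as -> by lia. ring.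
Qed.

Lemma is_series_even (b : nat -> R) l : is_series b l ->
  is_series (fun n => if Nat.odd n then 0 else b (Nat.div2 n)) l.
Proof.
rewrite !is_series_lim. intro H.
apply (is_lim_seq_ext (fun N => sum_f_R0 b (Nat.div2 N))).
- intro N. symmetry. apply sum_even.
- apply (is_lim_seq_subseq (sum_f_R0 b) l Nat.div2 div2_ev H).
Qed.

Lemma is_series_odd (b : nat -> R) l : is_series b l ->
  is_series (fun n => if Nat.odd n then b (Nat.div2 n) else 0) l.
Proof.
rewrite !is_series_lim. intro H.
apply is_lim_seq_incr_1.
apply (is_lim_seq_ext (fun N => sum_f_R0 b (Nat.div2 N))).
- intro N. symmetry. apply sum_odd.
- apply (is_lim_seq_subseq (sum_f_R0 b) l Nat.div2 div2_ev H).
Qed.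

Lemma cos_series x :
  is_series (fun n => if Nat.odd n then 0 else cos_n (Nat.div2 n) * (x * x) ^ (Nat.div2 n)) (cos x).
Proof.
apply (is_series_even (fun i => cos_n i * (x * x) ^ i)).
unfold cos. destruct (exist_cos (Rsqr x)) as [c Hc].
apply is_series_Reals. exact Hc.
Qed.

Lemma sin_series x :
  is_series (fun n => if Nat.odd n then x * (sin_n (Nat.div2 n) * (x * x) ^ (Nat.div2 n)) else 0) (sin x).
Proof.
apply (is_series_ext (fun n => scal x (if Nat.odd n then sin_n (Nat.div2 n) * (x * x) ^ (Nat.div2 n) else 0))).
- intro n. destruct (Nat.odd n); unfold scal; simpl; unfold mult; simpl; ring.
- unfold sin. destruct (exist_sin (Rsqr x)) as [c Hc].
  apply (is_series_scal_l x _ c).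
  apply (is_series_odd (fun i => sin_n i * (x * x) ^ i)).
  apply is_series_Reals. exact Hc.
Qed.

Set Implicit Arguments.

Lemma NatoddE n : Nat.odd n = odd n.
Proof.
elim: n => [|n IH] //.
by rewrite Nat.odd_succ -Nat.negb_odd IH.
Qed.

Lemma div2E n : Nat.div2 n = n./2.
Proof.
have h1 := Nat.div2_odd n; have h2 := odd_double_half n.
rewrite NatoddE in h1; rewrite -mul2n in h2.
case: (odd n) h1 h2 => /= h1 h2; lia.
Qed.

Lemma IZRm1 : IZR (Zneg xH) = Ropp (IZR (Zpos xH)).
Proof. by []. Qed.

Lemma coef_eq x n :
  (if Nat.odd n then INR (abs_c_path (Nat.div2 n)) / INR (fact n) * x ^ n else 0)
  = acoef n * x ^ n.
Proof.
rewrite NatoddE div2E.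
case hn: (odd n).
  by rewrite factE !INRE RdivE acoef_abs.
by rewrite R0E /acoef /TI hn RmultE mulr0z !mul0r.
Qed.

Lemma half2 i : (2 * i)./2 = i.
Proof. by rewrite mul2n doubleK. Qed.

Lemma ccoef_eq x n :
  ccoef n * x ^ n = (if Nat.odd n then 0 else cos_n (Nat.div2 n) * (x * x) ^ (Nat.div2 n)).
Proof.
rewrite NatoddE div2E /ccoef /CI /cos_n.
case hn: (odd n); first by rewrite mul0r Rmult_0_l.
have [i e] : exists i, n = (2 * i)%nat.
  exists n./2; have := odd_double_half n; rewrite hn -mul2n; lia.
rewrite e half2 multE IZRm1 !RealsE.
rewrite exprM (_ : GRing.exp x 2 = GRing.mul x x); last by rewrite expr2.
by rewrite rmorphXn rmorphN1.
Qed.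

Lemma scoef_eq x n :
  scoef n * x ^ n = (if Nat.odd n then x * (sin_n (Nat.div2 n) * (x * x) ^ (Nat.div2 n)) else 0).
Proof.
rewrite NatoddE div2E /scoef /SI /sin_n.
case hn: (odd n); last by rewrite mul0r Rmult_0_l.
have [i e] : exists i, n = (2 * i + 1)%nat.
  exists n./2; have := odd_double_half n; rewrite hn -mul2n; lia.
have h : (2 * i + 1)./2 = i by rewrite addn1 /= mul2n uphalf_double.
rewrite e h multE plusE IZRm1 !RealsE.
rewrite exprD expr1 exprM (_ : GRing.exp x 2 = GRing.mul x x); last by rewrite expr2.
rewrite rmorphXn rmorphN1.
by rewrite mulrA mulrC.
Qed.

Lemma prod_coef x n :
  sum_f_R0 (fun k => acoef k * x ^ k * (ccoef (n - k) * x ^ (n - k))) n = scoef n * x ^ n.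
Proof.
rewrite !RealsE -real_conv mulr_suml.
apply: eq_big_nat => k /andP [_ hk].
rewrite !RealsE.
have e : GRing.exp x n = GRing.mul (GRing.exp x k) (GRing.exp x (n - k)).
  by rewrite -exprD subnKC //; lia.
rewrite e.
rewrite -!mulrA; congr (_ * _).
congr (_ * _); rewrite mulrCA; congr (_ * _); by rewrite mulrCA.
Qed.

Lemma abs_series (c : nat -> R) x : (forall n, Rabs (c n) <= 1) -> Rabs x < 1 ->
  ex_series (fun n => Rabs (c n * x ^ n)).
Proof.
move=> hc hx.
apply: (ex_series_le _ (fun n => (Rabs x) ^ n)).
  move=> n. rewrite /norm /= /abs /= Rabs_Rabsolu Rabs_mult RPow_abs.
  rewrite -{2}(Rmult_1_l (Rabs (x ^ n))).
  apply: Rmult_le_compat_r; [exact: Rabs_pos | exact: hc].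
apply: ex_series_geom. by rewrite Rabs_Rabsolu.
Qed.

Theorem mainTheorem11 :
  exists r : R, 0 < r /\
    forall x : R, Rabs x < r ->
      is_series
        (fun n : nat =>
           if Nat.odd n
           then INR (abs_c_path (Nat.div2 n)) / INR (fact n) * x ^ n
           else 0)
        (tan x).
Proof.
exists 1; split; first exact: Rlt_0_1.
move=> x hx.
have ha : ex_series (fun n => Rabs (acoef n * x ^ n)).
  apply: abs_series => // n; apply/RleP; rewrite RabsE ?R1E; exact: acoef_bound.
have hcabs : ex_series (fun n => Rabs (ccoef n * x ^ n)).
  apply: abs_series => // n; apply/RleP; rewrite RabsE ?R1E; exact: ccoef_bound.
have hT := Series_correct _ (ex_series_Rabs _ ha).
set T := Series _ in hT.
have hc : is_series (fun n => ccoef n * x ^ n) (cos x).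
  apply: (is_series_ext _ _ _ _ (cos_series x)) => n; by rewrite ccoef_eq.
have hs : is_series (fun n => scoef n * x ^ n) (sin x).
  apply: (is_series_ext _ _ _ _ (sin_series x)) => n; by rewrite scoef_eq.
have hm := is_series_mult _ _ _ _ hT hc ha hcabs.
have hm' : is_series (fun n => scoef n * x ^ n) (T * cos x).
  apply: (is_series_ext _ _ _ _ hm) => n; exact: prod_coef.
have hTc : T * cos x = sin x.
  by rewrite -(is_series_unique _ _ hm') (is_series_unique _ _ hs).
have hcos : 0 < cos x.
  have := PI2_1; move/Rabs_def2: hx => [h1 h2].
  move=> hpi; apply: cos_gt_0; lra.
have -> : tan x = T.
  rewrite /tan -hTc. field. lra.
apply: (is_series_ext _ _ _ _ hT) => n.
by rewrite coef_eq.
Qed.
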